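(* Let $G$ be a persistent graph with vertex order $<$. If four vertices $p_1,p_2,p_3,p_4$ of $G$ form an induced $4$-cycle in this order (edges $\{p_1,p_2\},\{p_2,p_3\},\{p_3,p_4\},\{p_4,p_1\}$ and no others among them), then the two leftmost (with respect to $<$) of these four vertices are either $p_1$ and $p_3$, or $p_2$ and $p_4$.
   Context: A persistent graph is a graph $G$ together with a linear order $v_1<v_2<\dots<v_n$ on $V(G)$ such that (1) $\{v_i,v_{i+1}\}\in E(G)$ for all $i$; (2) X-property: for all $p<q<r<s$, if $\{p,r\}\in E(G)$ and $\{q,s\}\in E(G)$ then $\{p,s\}\in E(G)$; (3) bar-property: if $\{p,q\}\in E(G)$ and $p,q$ are not consecutive in the order, then there is a vertex $r$ with $p<r<q$ adjacent to both $p$ and $q$. *)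

(* Defs.v *)
From mathcomp Require Import all_boot all_order.
Set Implicit Arguments. Unset Strict Implicit. Unset Printing Implicit Defensive.

(* A finite simple graph on vertex set 'I_n, whose vertices are listed in the
   linear order v_0 < v_1 < ... < v_(n-1) (the natural order on 'I_n). *)
Definition simple_graph (n : nat) (e : rel 'I_n) : Prop :=
  (forall x y, e x y = e y x) /\ (forall x, ~~ e x x).

Definition persistent (n : nat) (e : rel 'I_n) : Prop :=
  simple_graph e /\
  (forall x y : 'I_n, val y = (val x).+1 -> e x y) /\
  (forall p q r s : 'I_n, p < q -> q < r -> r < s ->
      e p r -> e q s -> e p s) /\
  (forall p q : 'I_n, p < q -> e p q -> val q <> (val p).+1 ->
      exists r : 'I_n, [/\ p < r, r < q, e p r & e r q]).

Definition induced_C4 (n : nat) (e : rel 'I_n) (p1 p2 p3 p4 : 'I_n) : Prop :=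
  uniq [:: p1; p2; p3; p4] /\
  e p1 p2 /\ e p2 p3 /\ e p3 p4 /\ e p4 p1 /\
  ~~ e p1 p3 /\ ~~ e p2 p4.

(* Main.v *)
Require Import Defs.
From mathcomp Require Import all_boot all_order.
From mathcomp Require Import zify.
Set Implicit Arguments. Unset Strict Implicit.

Lemma Nlem n (e : rel 'I_n) : persistent e -> forall k (p s r : 'I_n),
  s - p <= k -> p < r -> r < s -> e p r -> e p s ->
  (forall x : 'I_n, r < x -> x < s -> ~~ e p x) -> e r s.
Proof.
move=> [[Es Ei] [Hc [HX Hb]]].
elim=> [|k IH] p s r Hk Hpr Hrs epr eps Hmax; first lia.
have inner : forall j (q : 'I_n), r - q <= j -> p < q -> q < r -> e q s -> e r s.
  elim=> [|j IHj] q Hj Hpq Hqr eqs; first lia.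
  have Hsn := ltn_ord s.
  have Hq1 : q.+1 < n by lia.
  pose q1 := Ordinal Hq1.
  have eqq1 : e q q1 by apply: Hc.
  have P1 : (q < q1 < s) && e q q1.
    by rewrite eqq1 andbT; apply/andP; split => /=; lia.
  case: (@arg_maxnP _ q1 (fun x : 'I_n => (q < x < s) && e q x) (fun x => val x) P1)
    => q' /andP[/andP[Hqq' Hq's] eqq'] Hmaxq'.
  have eq's : e q' s.
    apply: (IH q s q') => //; first lia.
    move=> x Hx1 Hx2; apply/negP => exq.
    have /Hmaxq' : (q < x < s) && e q x.
      by rewrite exq andbT; apply/andP; split; lia.
    rewrite /=; lia.
  case: (ltngtP q' r) => Hq'r.
  - apply: (IHj q') => //; lia.
  - have epq' : e p q' := HX p q r q' Hpq Hqr Hq'r epr eqq'.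
    by have := Hmax q' Hq'r Hq's; rewrite epq'.
  - have -> : r = q' by apply: val_inj.
    done.
have Hne : val s <> (val p).+1 by rewrite /=; lia.
have [r0 [Hpr0 Hr0s epr0 er0s]] := Hb p s (ltn_trans Hpr Hrs) eps Hne.
case: (ltngtP r0 r) => Hrr0.
- by apply: (inner (r - r0) r0).
- by have := Hmax r0 Hrr0 Hr0s; rewrite epr0.
- have <- : r0 = r by apply: val_inj.
  done.
Qed.

Lemma L1 n (e : rel 'I_n) : persistent e -> forall a b c d : 'I_n,
  a < b -> b < c -> c < d -> e a c -> e b d -> ~~ e a d -> False.
Proof.
move=> [_ [_ [HX _]]] a b c d h1 h2 h3 h4 h5 h6.
by move: h6; rewrite (HX a b c d h1 h2 h3 h4 h5).
Qed.

Lemma L2 n (e : rel 'I_n) : persistent e -> forall a b c d : 'I_n,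
  a < b -> b < c -> c < d -> e a b -> e b c -> e c d -> e a d ->
  ~~ e a c -> ~~ e b d -> False.
Proof.
move=> H a b c d hab hbc hcd eab ebc ecd ead nac nbd.
have H' := H.
move: H' => [[Es Ei] [Hc [HX Hb]]].
have P1 : (b < d) && e a d by rewrite ead andbT; lia.
case: (@arg_minnP _ d (fun x : 'I_n => (b < x) && e a x) (fun x => val x) P1)
  => m /andP[Hbm eam] Hmin.
have Hmd : m <= d by apply: Hmin.
case: (ltngtP m c) => Hmc.
- by move: nac; rewrite (HX a b m c hab Hbm Hmc eam ebc).
- have ebm : e b m.
    apply: (Nlem H (k := m - a) (p := a) (s := m) (r := b)) => //.
    move=> x Hx1 Hx2; apply/negP => eax.
    have /Hmin : (b < x) && e a x by rewrite eax andbT.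
    rewrite /=; lia.
  case: (ltngtP m d) => Hmd'.
  + by move: nbd; rewrite (HX b c m d hbc Hmc Hmd' ebm ecd).
  + lia.
  + have Emd : m = d by apply: val_inj.
    by move: nbd; rewrite -Emd ebm.
- have Emc : m = c by apply: val_inj.
  by move: nac; rewrite -Emc eam.
Qed.

Lemma K n (e : rel 'I_n) (p1 p2 p3 p4 : 'I_n) : persistent e ->
  e p1 p2 -> e p2 p3 -> e p3 p4 -> e p4 p1 -> ~~ e p1 p3 -> ~~ e p2 p4 ->
  nat_of_ord p1 != p2 -> nat_of_ord p1 != p3 -> nat_of_ord p1 != p4 ->
  nat_of_ord p2 != p3 -> nat_of_ord p2 != p4 -> nat_of_ord p3 != p4 ->
  p1 <= p2 -> p1 <= p3 -> p1 <= p4 ->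
  (maxn p1 p3 < minn p2 p4)%N \/ (maxn p2 p4 < minn p1 p3)%N.
Proof.
move=> H e12 e23 e34 e41 n13 n24 d12 d13 d14 d23 d24 d34 h2 h3 h4.
have H' := H; move: H' => [[Es _] _].
have e14 : e p1 p4 by rewrite Es.
have e43 : e p4 p3 by rewrite Es.
have e32 : e p3 p2 by rewrite Es.
have n42 : ~~ e p4 p2 by rewrite Es.
case: (ltngtP p3 p2) => c32; last by move: d23; rewrite /= c32 eqxx.
- case: (ltngtP p3 p4) => c34; last by move: d34; rewrite /= c34 eqxx.
  + left; lia.
  + exfalso; apply: (L2 H (a:=p1) (b:=p4) (c:=p3) (d:=p2)) => //; lia.
- case: (ltngtP p3 p4) => c34; last by move: d34; rewrite /= c34 eqxx.
  + exfalso; apply: (L2 H (a:=p1) (b:=p2) (c:=p3) (d:=p4)) => //; lia.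
  + case: (ltngtP p4 p2) => c42; last by move: d24; rewrite /= c42 eqxx.
    * exfalso; apply: (L1 H (a:=p1) (b:=p4) (c:=p2) (d:=p3)) => //; lia.
    * exfalso; apply: (L1 H (a:=p1) (b:=p2) (c:=p4) (d:=p3)) => //; lia.
Qed.

Lemma min4 (a b c d : nat) :
  [\/ a <= b /\ a <= c /\ a <= d, b <= c /\ b <= d /\ b <= a,
       c <= d /\ c <= a /\ c <= b | d <= a /\ d <= b /\ d <= c].
Proof.
case: (leqP a b) => ab; case: (leqP a c) => ac; case: (leqP a d) => ad;
case: (leqP b c) => bc; case: (leqP b d) => bd; case: (leqP c d) => cd;
first [ by apply: Or41; lia | by apply: Or42; lia | by apply: Or43; lia | by apply: Or44; lia ].
Qed.

Theorem mainTheorem5 (n : nat) (e : rel 'I_n) (p1 p2 p3 p4 : 'I_n) :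
  persistent e -> induced_C4 e p1 p2 p3 p4 ->
  (maxn p1 p3 < minn p2 p4)%N \/ (maxn p2 p4 < minn p1 p3)%N.
Proof.
move=> H [Hu [e12 [e23 [e34 [e41 [n13 n24]]]]]].
have H' := H; move: H' => [[Es _] _].
have e21 : e p2 p1 by rewrite Es.
have e32 : e p3 p2 by rewrite Es.
have e43 : e p4 p3 by rewrite Es.
have e14 : e p1 p4 by rewrite Es.
have n31 : ~~ e p3 p1 by rewrite Es.
have n42 : ~~ e p4 p2 by rewrite Es.
move: Hu; rewrite /= !inE !negb_or -!val_eqE /= => /andP[/and3P[d12 d13 d14] /andP[/andP[d23 d24] /andP[d34 _]]].
have s := fun x y : nat => (x != y) = (y != x).
have d21 : val p2 != val p1 by rewrite eq_sym.
have d31 : val p3 != val p1 by rewrite eq_sym.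
have d41 : val p4 != val p1 by rewrite eq_sym.
have d32 : val p3 != val p2 by rewrite eq_sym.
have d42 : val p4 != val p2 by rewrite eq_sym.
have d43 : val p4 != val p3 by rewrite eq_sym.
case: (min4 p1 p2 p3 p4) => [[a1 [a2 a3]]|[a1 [a2 a3]]|[a1 [a2 a3]]|[a1 [a2 a3]]].
- exact: (K H e12 e23 e34 e41 n13 n24 d12 d13 d14 d23 d24 d34 a1 a2 a3).
- have := K H e23 e34 e41 e12 n24 n31 d23 d24 d21 d34 d31 d41 a1 a2 a3.
  by rewrite ?(minnC p3 p1) ?(maxnC p3 p1) ?(minnC p4 p2) ?(maxnC p4 p2) => -[h|h]; [right|left].
- have := K H e34 e41 e12 e23 n31 n42 d34 d31 d32 d41 d42 d12 a1 a2 a3.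
  by rewrite ?(minnC p3 p1) ?(maxnC p3 p1) ?(minnC p4 p2) ?(maxnC p4 p2) => -[h|h]; [left|right].
- have := K H e41 e12 e23 e34 n42 n13 d41 d42 d43 d12 d13 d23 a1 a2 a3.
  by rewrite ?(minnC p3 p1) ?(maxnC p3 p1) ?(minnC p4 p2) ?(maxnC p4 p2) => -[h|h]; [right|left].
Qed.
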